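(* Let $G$ be a finite connected graph in which no edge joins two vertices that both have degree at least $3$, and let $K>0$. Then every stable fixed point $\theta$ of the Kuramoto model on $G$ (as in the context) satisfies $\Delta_{ij}\in[-\pi/2,\pi/2]$ for every edge $\langle ij\rangle$ of $G$.
   Context: The Kuramoto model on $G$ with vertices $1,\dots,n$ is $\dot\theta_i=-K\sum_{j\sim i}\sin(\theta_i-\theta_j)$, where $j\sim i$ means $j$ is adjacent to $i$. A fixed point is $\theta\in\mathbb{R}^n$ with $\sum_{j\sim i}\sin(\theta_i-\theta_j)=0$ for all $i$. For adjacent $i,j$, $\Delta_{ij}$ is $\theta_i-\theta_j$ reduced modulo $2\pi$ into $(-\pi,\pi]$. The stability matrix $M$ has entries $M_{ij}=K\cos(\theta_i-\theta_j)$ if $i\sim j$, $M_{ii}=-\sum_{k\sim i}K\cos(\theta_i-\theta_k)$, and $0$ otherwise; a fixed point is stable if $M$ is negative semidefinite. *)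

(* Defs.v *)
From HB Require Import structures.
From mathcomp Require Import all_boot all_order all_algebra.
From mathcomp Require Import all_classical all_reals all_analysis.
Set Implicit Arguments. Unset Strict Implicit. Unset Printing Implicit Defensive.
Import Order.TTheory GRing.Theory Num.Theory.
Local Open Scope ring_scope.

Definition simple_graph (n : nat) (adj : rel 'I_n) : Prop :=
  symmetric adj /\ irreflexive adj.

Definition connected_graph (n : nat) (adj : rel 'I_n) : Prop :=
  forall i j : 'I_n, connect adj i j.

Definition degree (n : nat) (adj : rel 'I_n) (i : 'I_n) : nat :=
  #|[set j | adj i j]|.

Definition kuramoto_fixed_point (R : realType) (n : nat) (adj : rel 'I_n)
  (theta : 'I_n -> R) : Prop :=
  forall i : 'I_n, \sum_(j | adj i j) sin (theta i - theta j) = 0.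

Definition stability_matrix (R : realType) (n : nat) (adj : rel 'I_n) (K : R)
  (theta : 'I_n -> R) : 'M[R]_n :=
  \matrix_(i, j)
    (if i == j then - \sum_(k | adj i k) K * cos (theta i - theta k)
     else if adj i j then K * cos (theta i - theta j) else 0).

Definition neg_semidef (R : realType) (n : nat) (M : 'M[R]_n) : Prop :=
  forall x : 'cV[R]_n, (x^T *m M *m x) 0 0 <= 0.

Definition kuramoto_stable (R : realType) (n : nat) (adj : rel 'I_n) (K : R)
  (theta : 'I_n -> R) : Prop :=
  kuramoto_fixed_point adj theta /\ neg_semidef (stability_matrix adj K theta).

(* Reduction of x modulo 2 pi into (-pi, pi]. *)
Definition wrap_angle (R : realType) (x : R) : R :=
  x - 2 * pi * (Num.ceil ((x - pi) / (2 * pi)))%:~R.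

Definition Delta (R : realType) (n : nat) (theta : 'I_n -> R) (i j : 'I_n) : R :=
  wrap_angle (theta i - theta j).

(* Main.v *)
Require Import Defs.
From HB Require Import structures.
From mathcomp Require Import all_boot all_order all_algebra.
From mathcomp Require Import all_classical all_reals all_analysis.
From mathcomp Require Import zify ring lra.
Import Order.TTheory GRing.Theory Num.Theory.
Local Open Scope ring_scope.

Lemma sum_nbr2 (R : realType) (n : nat) (adj : rel 'I_n) (i j : 'I_n) :
  adj i j -> (degree adj i < 3)%N ->
  (forall F : 'I_n -> R, \sum_(l | adj i l) F l = F j) \/
  (exists k, [/\ adj i k, k != j & forall F : 'I_n -> R, \sum_(l | adj i l) F l = F j + F k]).
Proof.
move=> aij dg.
have E : forall F : 'I_n -> R, \sum_(l | adj i l) F l = F j + \sum_(l | adj i l && (l != j)) F l.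
  by move=> F; rewrite (bigD1 j).
case: (pickP (fun l => adj i l && (l != j))) => [k /andP[aik kj]|none].
  right; exists k; split => // F; rewrite E.
  rewrite (bigD1 k) /=; last by rewrite aik kj.
  rewrite big1 ?addr0 // => l /andP[/andP[ail lj] lk].
  exfalso; move: dg; rewrite /degree.
  have sub : j |: [set k; l] \subset [set x | adj i x].
    apply/fintype.subsetP => x; rewrite !inE.
    by case/orP=> [|/orP[]] /eqP->.
  have := subset_leq_card sub.
  rewrite cardsU1 cards2 !inE negb_or (eq_sym j k) kj (eq_sym j l) lj (eq_sym k l) (negbTE lk) /=.
  lia.
left => F; rewrite E big_pred0 ?addr0 // => l; exact: none.
Qed.

Lemma cos_perN (R : realType) (x : R) (m : nat) : cos (x + 2 * pi * m%:R) = cos x.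
Proof.
have e : 2 * pi * m%:R = pi *+ 2 *+ m :> R.
  rewrite -mulr_natr mulr2n; ring.
rewrite e. exact: (periodicn (@cosD2pi R) m x).
Qed.

Lemma cos_perZ (R : realType) (x : R) (k : int) : cos (x - 2 * pi * k%:~R) = cos x.
Proof.
case: k => m.
  rewrite -[in RHS](subrK (2 * pi * (Posz m)%:~R) x) -[(Posz m)%:~R]/(m%:R).
  by rewrite cos_perN.
rewrite NegzE.
rewrite -[in RHS](@cos_perN R x m.+1).
have -> : x - 2 * pi * (- (Posz m.+1))%:~R = x + 2 * pi * m.+1%:R.
  rewrite mulrNz. rewrite -[(Posz m.+1)%:~R]/(m.+1%:R). ring.
done.
Qed.

Lemma wrap_itv (R : realType) (x : R) : - pi < wrap_angle x <= pi.
Proof.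
rewrite /wrap_angle.
set c := Num.ceil _.
have := Num.Theory.ceil_itv ((x - pi) / (2 * pi)).
rewrite -/c => /andP[h1 h2].
have p0 := @pi_gt0 R.
have p2 : 0 < 2 * pi :> R by rewrite mulr_gt0.
rewrite ler_pdivrMr // in h2.
rewrite ltr_pdivlMr // in h1.
rewrite intrB in h1.
rewrite (_ : 1%:~R = 1) // in h1.
move: h1 h2; set cc := (c%:~R : R) => h1 h2.
apply/andP; split; nra.
Qed.

Lemma cos_wrap (R : realType) (x : R) : cos (wrap_angle x) = cos x.
Proof. exact: cos_perZ. Qed.

Lemma wrap_half (R : realType) (x : R) : 0 <= cos x -> - (pi / 2) <= wrap_angle x <= pi / 2.
Proof.
rewrite -cos_wrap; have := @wrap_itv R x; set y := wrap_angle x => /andP[h1 h2] hc.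
have p0 := @pi_gt0 R.
have key : forall z : R, 0 <= z <= pi -> 0 <= cos z -> z <= pi / 2.
  move=> z /andP[z0 zp] cz; rewrite leNgt; apply/negP => hz.
  have : cos z < cos (pi / 2).
    rewrite ltr_cos // in_itv /=; apply/andP; lra.
  rewrite cos_pihalf; lra.
case: (lerP 0 y) => hy.
  apply/andP; split; first lra.
  by apply: key => //; apply/andP.
apply/andP; split; last lra.
rewrite lerNl; apply: key; first by apply/andP; lra.
by rewrite cosN.
Qed.

Lemma sum2 (R : realType) (n : nat) (i j : 'I_n) (a b : R) (g : 'I_n -> R) :
  i != j ->
  \sum_k (if k == i then a else if k == j then b else 0) * g k = a * g i + b * g j.
Proof.
move=> ij.
rewrite (bigD1 i) // (bigD1 j) /=; last by rewrite eq_sym.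
rewrite eqxx (eq_sym j i) (negbTE ij) eqxx.
rewrite big1 ?addr0 // => k /andP[ki kj]; by rewrite (negbTE ki) (negbTE kj) mul0r.
Qed.

Lemma quad (R : realType) (n : nat) (M : 'M[R]_n) (i j : 'I_n) (t : R) : i != j ->
  let x := \col_k (if k == i then 1 else if k == j then t else 0) in
  (x^T *m M *m x) 0 0 = M i i + t * M j i + t * (M i j + t * M j j).
Proof.
move=> ij x.
rewrite mxE.
under eq_bigr => k _ do rewrite mxE mulrC mxE.
rewrite sum2 //.
under eq_bigr => l _ do rewrite !mxE.
rewrite sum2 //.
under eq_bigr => l _ do rewrite !mxE.
rewrite sum2 //.
ring.
Qed.

Lemma key (R : realType) (n : nat) (adj : rel 'I_n) (K : R) (theta : 'I_n -> R) (i j : 'I_n) :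
  simple_graph adj -> 0 < K -> kuramoto_stable adj K theta ->
  adj i j -> (degree adj i < 3)%N -> 0 <= cos (theta i - theta j).
Proof.
move=> [sym irr] K0 [fp ns] aij dg.
have ij : i != j by apply/eqP => e; move: aij; rewrite e irr.
rewrite leNgt; apply/negP => c0.
set c := cos (theta i - theta j) in c0.
set A := \sum_(l | adj i l) cos (theta i - theta l).
have A0 : A <= 0.
  case: (@sum_nbr2 R n adj i j aij dg) => [H|[k [aik kj H]]].
    by rewrite /A H -/c; lra.
  rewrite /A H.
  have := fp i; rewrite H => hs.
  have e1 := cos2sin2 (theta i - theta j).
  have e2 := cos2sin2 (theta i - theta k).
  rewrite -/c.
  set s1 := sin (theta i - theta j) in hs e1.
  set s2 := sin (theta i - theta k) in hs e2.
  set c2 := cos (theta i - theta k) in e2 *.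
  have : c2 ^+ 2 = c ^+ 2 by rewrite e1 e2 (_ : s2 = - s1) ?sqrrN //; lra.
  move=> e; nra.
set M := stability_matrix adj K theta.
have Mii : M i i = - (K * A).
  by rewrite /M /stability_matrix mxE eqxx mulr_sumr.
have Mij : M i j = K * c.
  by rewrite /M /stability_matrix mxE (negbTE ij) aij.
have Mji : M j i = K * c.
  rewrite /M /stability_matrix mxE eq_sym (negbTE ij) (sym j i) aij /c.
  by rewrite -opprB cosN.
set m := M j j.
set t := K * c / (`|m| + 1).
have m1 : 0 < `|m| + 1 by have := normr_ge0 m; lra.
have ht : t * (`|m| + 1) = K * c by rewrite /t divfK // gt_eqF.
have Kc : K * c < 0 by nra.
have tn : t < 0 by rewrite /t ltr_pdivrMr // mul0r.
have := ns (\col_k (if k == i then 1 else if k == j then t else 0)).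
rewrite quad // Mii Mij Mji -/m.
have mm : - `|m| <= m by exact: lerNnormlW (lexx _).
have KA : 0 <= - (K * A) by nra.
rewrite -ht.
have t2 : 0 < t * t by nra.
have tm : - (t * t * `|m|) <= t * t * m by nra.
nra.
Qed.

Theorem lemma2 (R : realType) (n : nat) (adj : rel 'I_n) (K : R) (theta : 'I_n -> R) :
  simple_graph adj ->
  connected_graph adj ->
  (forall i j : 'I_n, adj i j -> ~ ((3 <= degree adj i)%N /\ (3 <= degree adj j)%N)) ->
  0 < K ->
  kuramoto_stable adj K theta ->
  forall i j : 'I_n, adj i j ->
    - (pi / 2) <= Delta theta i j <= pi / 2.
Proof.
move=> sg _ hdeg K0 st i j aij.
rewrite /Delta; apply: wrap_half.
have [sym _] := sg.
case: (ltnP (degree adj i) 3) => di.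
  exact: (@key R n adj K theta i j sg K0 st aij di).
case: (ltnP (degree adj j) 3) => dj.
  have aji : adj j i by rewrite sym.
  rewrite -cosN opprB.
  exact: (@key R n adj K theta j i sg K0 st aji dj).
by exfalso; apply: (hdeg i j aij).
Qed.
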